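(* Let $H=\sum_ic_iP_i$ be a Pauli Hamiltonian, $|\psi\rangle$ a state, $\mathcal{G}=(G^{[1]},\dots,G^{[m]})$ a grouping of $H$ and $\mathcal{R}=(G'^{[1]},\dots,G'^{[m]})$ a repacking of $\mathcal{G}$. Fix positive shot counts $M_1,\dots,M_m$ such that $G^{[j]}$ and $G'^{[j]}$ are each measured $M_j$ times. Define $\mathrm{Var}^*(\mathcal{G})=\min_w\mathrm{Var}(\overline{E}_{\mathcal{G}}(w))$ and $\mathrm{Var}^*(\mathcal{R})=\min_w\mathrm{Var}(\overline{E}_{\mathcal{R}}(w))$, where the variances are the exact variances (including all within-group covariances). Then $\mathrm{Var}^*(\mathcal{R})\le\mathrm{Var}^*(\mathcal{G})$.
   Context: A Pauli Hamiltonian is $H=\sum_{i=1}^Nc_iP_i$ with real nonzero $c_i$ and distinct $n$-qubit Pauli strings. A grouping is a list of pairwise disjoint sets of mutually commuting Pauli terms of $H$ covering all terms; an overlapped grouping drops disjointness; a repacking of $(G^{[1]},\dots,G^{[m]})$ is an overlapped grouping $(G'^{[1]},\dots,G'^{[m]})$ with $G^{[j]}\subseteq G'^{[j]}$. Measurement model: group $j$ is measured in $M_j$ independent shots, each giving simultaneous $\pm1$ outcomes of all its operators with the Born-rule distribution for $|\psi\rangle$; different groups use independent shots. For an (overlapped) grouping $\mathcal{S}$, $\Gamma_{\mathcal{S}}(i)=\{j:P_i\in \text{group } j\}$, $\overline{\langle P_i\rangle}_{(j)}$ is the sample mean of $P_i$ over group $j$'s shots, and $\overline{E}_{\mathcal{S}}(w)=\sum_ic_i\sum_{j\in\Gamma_{\mathcal{S}}(i)}w_{i,j}\overline{\langle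 P_i\rangle}_{(j)}$ with real weights satisfying $\sum_{j\in\Gamma_{\mathcal{S}}(i)}w_{i,j}=1$ for each $i$; the minimum is over all such weights. *)

(* Defs.v *)
(* Complex scalars: an arbitrary numClosedFieldType C
   (e.g. R[i] for a real closed field R, or algC); this is a generalization
   of the complex numbers. *)
From HB Require Import structures.
From mathcomp Require Import all_boot all_order all_algebra.
Set Implicit Arguments.
Unset Strict Implicit.
Unset Printing Implicit Defensive.
Import Order.TTheory GRing.Theory Num.Theory.
Local Open Scope ring_scope.

Section Pauli.
Variable C : numClosedFieldType.

(* single-qubit Pauli index: 0 = I, 1 = X, 2 = Y, 3 = Z *)
Definition pauli_string (n : nat) := {ffun 'I_n -> 'I_4}.

(* matrix entry <a| sigma_p |b>, with a = row, b = column *)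
Definition pauli1 (p : 'I_4) (a b : bool) : C :=
  match val p with
  | 0 => (a == b)%:R
  | 1 => (a != b)%:R
  | 2 => if a == b then 0 else if a then 'i else - 'i
  | _ => if a == b then (if a then -1 else 1) else 0
  end.

Definition bit (k x : nat) : bool := odd (x %/ 2 ^ k).

(* the n-qubit Pauli string as a 2^n x 2^n matrix (tensor product, entrywise) *)
Definition pauli_mx (n : nat) (p : pauli_string n) : 'M[C]_(2 ^ n) :=
  \matrix_(x, y) \prod_(k < n) pauli1 (p k) (bit k x) (bit k y).

Definition mx_commute (d : nat) (A B : 'M[C]_d) : Prop := A *m B = B *m A.

Definition pauli_hamiltonian (n N : nat) (P : 'I_N -> pauli_string n)
  (c : 'I_N -> C) : Prop :=
  injective P /\ (forall i, c i \is Num.real /\ c i != 0).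

Definition is_state (n : nat) (psi : 'cV[C]_(2 ^ n)) : Prop :=
  \sum_(x < 2 ^ n) (psi x 0)^* * psi x 0 = 1.

Definition overlapped_grouping (n N m : nat) (P : 'I_N -> pauli_string n)
  (S : 'I_m -> {set 'I_N}) : Prop :=
  (forall i, exists j, i \in S j) /\
  (forall j i k, i \in S j -> k \in S j ->
     mx_commute (pauli_mx (P i)) (pauli_mx (P k))).

Definition grouping (n N m : nat) (P : 'I_N -> pauli_string n)
  (S : 'I_m -> {set 'I_N}) : Prop :=
  overlapped_grouping P S /\
  (forall j j', j != j' -> [disjoint S j & S j']).

Definition repacking (n N m : nat) (P : 'I_N -> pauli_string n)
  (G R : 'I_m -> {set 'I_N}) : Prop :=
  overlapped_grouping P R /\ (forall j, G j \subset R j).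

(* outcome b : bool stands for the eigenvalue (-1)^b *)
Definition sgn (b : bool) : C := if b then -1 else 1.

Definition proj (n : nat) (p : pauli_string n) (b : bool) : 'M[C]_(2 ^ n) :=
  (2%:R)^-1 *: (1%:M + sgn b *: pauli_mx p).

(* Born-rule probability of the joint outcome s for one shot of group S j.
   Outcomes of operators outside the group are fixed to false (+1). *)
Definition born (n N m : nat) (P : 'I_N -> pauli_string n)
  (psi : 'cV[C]_(2 ^ n)) (S : 'I_m -> {set 'I_N}) (j : 'I_m)
  (s : {ffun 'I_N -> bool}) : C :=
  if [forall i, (i \notin S j) ==> ~~ s i] then
    ((map_mx (fun z => z^*) psi)^T
       *m (\big[@mulmx C _ _ _/1%:M]_(i in S j) proj (P i) (s i)) *m psi) 0 0
  else 0.

(* sample space: for every group j, the outcomes of its M j shots *)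
Definition outcomes (N m : nat) (M : 'I_m -> nat) :=
  {dffun forall j : 'I_m, {ffun 'I_(M j) -> {ffun 'I_N -> bool}}}.

Definition prob (n N m : nat) (P : 'I_N -> pauli_string n)
  (psi : 'cV[C]_(2 ^ n)) (S : 'I_m -> {set 'I_N}) (M : 'I_m -> nat)
  (om : outcomes N M) : C :=
  \prod_(j < m) \prod_(k < M j) born P psi S j (om j k).

Definition sample_mean (N m : nat) (M : 'I_m -> nat) (om : outcomes N M)
  (i : 'I_N) (j : 'I_m) : C :=
  (M j)%:R^-1 * \sum_(k < M j) sgn (om j k i).

Definition estimator (N m : nat) (c : 'I_N -> C) (S : 'I_m -> {set 'I_N})
  (M : 'I_m -> nat) (w : 'I_N -> 'I_m -> C) (om : outcomes N M) : C :=
  \sum_(i < N) c i * \sum_(j < m | i \in S j) w i j * sample_mean om i j.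

Definition weights (N m : nat) (S : 'I_m -> {set 'I_N})
  (w : 'I_N -> 'I_m -> C) : Prop :=
  (forall i j, w i j \is Num.real) /\
  (forall i, \sum_(j < m | i \in S j) w i j = 1).

Definition Var (n N m : nat) (P : 'I_N -> pauli_string n) (c : 'I_N -> C)
  (psi : 'cV[C]_(2 ^ n)) (S : 'I_m -> {set 'I_N}) (M : 'I_m -> nat)
  (w : 'I_N -> 'I_m -> C) : C :=
  \sum_(om : outcomes N M) prob P psi S om * (estimator c S w om) ^+ 2
  - (\sum_(om : outcomes N M) prob P psi S om * estimator c S w om) ^+ 2.

End Pauli.

(* Main.v *)
Require Import Defs.
From HB Require Import structures.
From mathcomp Require Import all_boot all_order all_algebra.
Set Implicit Arguments.
Unset Strict Implicit.
Unset Printing Implicit Defensive.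
Import Order.TTheory GRing.Theory Num.Theory.
Local Open Scope ring_scope.
Section Dep.
Variables (R : comNzRingType) (I : finType) (T : I -> finType).
Notation fT := {dffun forall i, T i}.

Lemma dep_seq (F : forall i, T i -> R) (r : seq I) : uniq r -> forall g : fT,
  \sum_(f : fT | [forall x, (x \notin r) ==> (f x == g x)]) \prod_(i <- r) F i (f i)
  = \prod_(i <- r) \sum_(t : T i) F i t.
Proof.
elim: r => [_ g | i r IH /andP[ir ur] g].
  rewrite big_nil (big_pred1 g) ?big_nil // => f /=.
  apply/forallP/eqP => [H|->]; last by move=> x.
  by apply/(ffunP f g).1 => x; apply/eqP; exact: (H x).
rewrite (partition_big (fun f : fT => f i) predT) //=.
rewrite [RHS]big_cons mulr_suml.
apply: eq_bigr => t _.
rewrite -(IH ur (finfun (dfwith g t))) mulr_sumr.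
apply: eq_big => f.
  apply/andP/forallP => [[/forallP H /eqP fi] x | H].
    apply/implyP; rewrite ffunE.
    case: (dfwithP g t x) => [_|y iy yr]; first by rewrite fi.
    by have := H y; rewrite inE negb_or eq_sym iy yr.
  split.
    apply/forallP => x; apply/implyP; rewrite inE negb_or => /andP[xi xr].
    by have := H x; rewrite xr ffunE dfwith_out // eq_sym.
  by have := H i; rewrite ir ffunE dfwith_in.
by move=> /andP[_ /eqP fi]; rewrite big_cons fi.
Qed.

Lemma dep_distr (F : forall i, T i -> R) (g : fT) :
  \sum_(f : fT) \prod_i F i (f i) = \prod_i \sum_(t : T i) F i t.
Proof.
rewrite -(dep_seq F (index_enum_uniq I) g).
by apply: eq_bigl => f; symmetry; apply/forallP => x; rewrite mem_index_enum.
Qed.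
End Dep.
Section Mx.
Variables (K : comNzRingType) (d : nat) (I : finType) (D A : {set I}).
Variable X : I -> bool -> 'M[K]_d.
Hypothesis XS : forall i, X i false + X i true = 1%:M.
Notation S := {ffun I -> bool}.

Definition cnd (r : seq I) (s0 s : S) :=
  [forall x, ((x \notin r) || (x \notin D) || (x \in A)) ==> (s x == s0 x)].

Lemma mx_seq (r : seq I) : uniq r -> forall s0 : S,
  \sum_(s : S | cnd r s0 s) \big[@mulmx K d d d/1%:M]_(i <- r | i \in D) X i (s i)
  = \big[@mulmx K d d d/1%:M]_(i <- r | (i \in D) && (i \in A)) X i (s0 i).
Proof.
elim: r => [_ s0 | i r IH /andP[ir ur] s0].
  rewrite big_nil (big_pred1 s0) ?big_nil // => s /=.
  apply/forallP/eqP => [H|->]; last by move=> x; apply/implyP.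
  by apply/ffunP => x; apply/eqP; exact: (H x).
have Ecnd : (i \notin D) || (i \in A) -> cnd (i :: r) s0 =1 cnd r s0.
  move=> hi s; apply: eq_forallb => x.
  case: (eqVneq x i) => [->|xi]; first by move: hi; rewrite !inE eqxx (negbTE ir); case: (i \in D); case: (i \in A).
  by rewrite inE negb_or xi.
case iD: (i \in D); last first.
  rewrite [RHS]big_cons iD /= -IH //.
  apply: eq_big => [s|s _]; last by rewrite big_cons iD.
  by apply: Ecnd; rewrite iD.
case iA: (i \in A).
  rewrite [RHS]big_cons iD iA /= -IH // mulmx_sumr.
  apply: eq_big => [s|s]; first by apply: Ecnd; rewrite iA orbT.
  rewrite /cnd => /forallP /(_ i).
  by rewrite iA !orbT /= => /eqP si; rewrite big_cons iD si.
rewrite [RHS]big_cons iD iA /=.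
rewrite (partition_big (fun s : S => s i) predT) //=.
pose s1 (b : bool) : S := [ffun x => if x == i then b else s0 x].
have Q b : \big[@mulmx K d d d/1%:M]_(j <- r | (j \in D) && (j \in A)) X j (s1 b j)
    = \big[@mulmx K d d d/1%:M]_(j <- r | (j \in D) && (j \in A)) X j (s0 j).
  rewrite big_seq_cond [RHS]big_seq_cond; apply: eq_bigr => j /andP[jr _].
  rewrite ffunE; case: eqP => // ji; by move: ir; rewrite -ji jr.
transitivity (\sum_(b : bool) X i b *m \big[@mulmx K d d d/1%:M]_(j <- r | (j \in D) && (j \in A)) X j (s0 j)).
  apply: eq_bigr => b _; rewrite -(Q b) -(IH ur (s1 b)) mulmx_sumr.
  apply: eq_big => [s|s /andP[_ /eqP <-]]; last by rewrite big_cons iD.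
  apply/andP/forallP => [[/forallP H /eqP si] x | H].
    rewrite ffunE; case: (eqVneq x i) => [->|xi]; first by rewrite si eqxx implybT.
    by have := H x; rewrite inE negb_or xi.
  split.
    apply/forallP => x; case: (eqVneq x i) => [->|xi]; first by rewrite iD iA inE eqxx.
    by have := H x; rewrite inE negb_or xi /= ffunE (negbTE xi).
  by have := H i; rewrite ir ffunE eqxx.
by rewrite -mulmx_suml big_bool /= addrC XS mul1mx.
Qed.
End Mx.

Section Main.
Variables (C : numClosedFieldType) (n N m : nat).
Variables (P : 'I_N -> pauli_string n) (psi : 'cV[C]_(2 ^ n)).
Variables (G R : 'I_m -> {set 'I_N}) (M : 'I_m -> nat).
Hypothesis GR : forall j, G j \subset R j.
Notation S := {ffun 'I_N -> bool}.

Lemma proj_sum (p : pauli_string n) : proj C p false + proj C p true = 1%:M.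
Proof.
rewrite /proj /sgn -scalerDr scale1r scaleN1r addrACA subrr addr0.
by rewrite -mulr2n -scaler_nat scalerA mulVf ?scale1r // pnatr_eq0.
Qed.

Definition piS j (s : S) : S := [ffun i => (i \in G j) && s i].

Lemma born_fibre j (s' : S) :
  \sum_(s | piS j s == s') born P psi R j s = born P psi G j s'.
Proof.
rewrite /born; case: ifP => zs; last first.
  rewrite big_pred0 // => s; apply/negbTE/eqP => E.
  move/negbT: zs; rewrite negb_forall => /existsP [i].
  rewrite negb_imply negbK => /andP[iG si]; move: si.
  by rewrite -E ffunE (negbTE iG).
rewrite -big_mkcondr /=.
have -> : \big[@mulmx C _ _ _/1%:M]_(i in G j) proj C (P i) (s' i)
   = \big[@mulmx C _ _ _/1%:M]_(i in R j | i \in G j) proj C (P i) (s' i).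
  apply: eq_bigl => i; case iG: (i \in G j); rewrite ?andbF //.
  by rewrite (subsetP (GR j)).
rewrite -(mx_seq (X := fun i b => proj C (P i) b) (R j) (G j)
   (fun i => proj_sum (P i)) (index_enum_uniq _) s').
rewrite mulmx_sumr mulmx_suml summxE.
apply: eq_big => [s|s _ //].
apply/andP/forallP => [[/eqP E /forallP Z] x | H].
  apply/implyP; rewrite mem_index_enum /= => /orP[xR|xG].
    have := Z x; rewrite xR /= => sx.
    have := forallP zs x; rewrite (contra (subsetP (GR j) x)) //= => s'x.
    by rewrite (negbTE sx) (negbTE s'x).
  by rewrite -E ffunE xG.
split.
  apply/eqP/ffunP => x; rewrite ffunE.
  case xG: (x \in G j).
    by have := H x; rewrite xG orbT /= => /eqP.
  by have := forallP zs x; rewrite xG /= => /negbTE ->.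
apply/forallP => x; apply/implyP => xR.
by have := H x; rewrite xR orbT /= => /eqP ->; have := forallP zs x;
  rewrite (contra (subsetP (GR j) x)).
Qed.

Definition piO (om : outcomes N M) : outcomes N M :=
  [ffun j => [ffun k => piS j (om j k)]].

Lemma prob_fibre (om' : outcomes N M) :
  \sum_(om | piO om == om') prob P psi R om = prob P psi G om'.
Proof.
rewrite big_mkcond /=.
transitivity (\sum_(om : outcomes N M) \prod_(j < m) \prod_(k < M j)
   ((piS j (om j k) == om' j k)%:R * born P psi R j (om j k))).
  apply: eq_bigr => om _; rewrite /prob; case: eqP => [E|NE].
    apply: eq_bigr => j _; apply: eq_bigr => k _.
    by rewrite -E !ffunE eqxx mul1r.
  case: (boolP [exists j, [exists k, piS j (om j k) != om' j k]]) =>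
      [/existsP[j /existsP[k jk]] | H].
    by rewrite (bigD1 j) //= (bigD1 k) //= (negbTE jk) !mul0r.
  exfalso; apply: NE; apply/ffunP => j; apply/ffunP => k; rewrite !ffunE.
  apply/eqP; move: H; rewrite negb_exists => /forallP/(_ j).
  by rewrite negb_exists => /forallP/(_ k); rewrite negbK.
rewrite (@dep_distr _ _ (fun j => {ffun 'I_(M j) -> S}) (fun j (t : {ffun 'I_(M j) -> S}) => \prod_(k < M j)
   ((piS j (t k) == om' j k)%:R * born P psi R j (t k))) om').
apply: eq_bigr => j _.
transitivity (\prod_(k < M j) \sum_(s : S) ((piS j s == om' j k)%:R * born P psi R j s)).
  by rewrite bigA_distr_bigA.
apply: eq_bigr => k _; rewrite -born_fibre [RHS]big_mkcond /=.
by apply: eq_bigr => s _; case: (_ == _); rewrite ?mul1r ?mul0r.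
Qed.

Lemma push (F : outcomes N M -> C) :
  \sum_(om : outcomes N M) prob P psi R om * F (piO om)
  = \sum_(om : outcomes N M) prob P psi G om * F om.
Proof.
rewrite (partition_big piO predT) //=; apply: eq_bigr => om' _.
rewrite -prob_fibre mulr_suml; apply: eq_bigr => om /eqP <-.
by [].
Qed.

Lemma est_eq (c : 'I_N -> C) (wG : 'I_N -> 'I_m -> C) (om : outcomes N M) :
  estimator c R (fun i j => if i \in G j then wG i j else 0) om
  = estimator c G wG (piO om).
Proof.
apply: eq_bigr => i _; congr (_ * _).
rewrite big_mkcond [RHS]big_mkcond /=; apply: eq_bigr => j _.
case iG: (i \in G j); last by case: (i \in R j); rewrite ?mul0r.
rewrite (subsetP (GR j) i iG); congr (_ * _).
rewrite /sample_mean; congr (_ * _); apply: eq_bigr => k _.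
by rewrite !ffunE iG.
Qed.
End Main.

Set Strict Implicit.
Unset Implicit Arguments.

Theorem theorem6 (C : numClosedFieldType) (n N m : nat)
  (P : 'I_N -> pauli_string n) (c : 'I_N -> C) (psi : 'cV[C]_(2 ^ n))
  (G R : 'I_m -> {set 'I_N}) (M : 'I_m -> nat) :
  pauli_hamiltonian P c ->
  is_state psi ->
  grouping C P G ->
  repacking C P G R ->
  (forall j, (0 < M j)%N) ->
  forall wG : 'I_N -> 'I_m -> C, weights G wG ->
  exists wR : 'I_N -> 'I_m -> C, weights R wR /\
    Var P c psi R M wR <= Var P c psi G M wG.
Proof.
move=> _ _ _ [_ GR] _ wG [wr ws].
exists (fun i j => if i \in G j then wG i j else 0); split.
  split=> [i j|i]; first by case: ifP => _; rewrite ?rpred0 ?wr.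
  rewrite -(ws i) big_mkcond [RHS]big_mkcond /=; apply: eq_bigr => j _.
  case iG: (i \in G j); last by case: (i \in R j).
  by rewrite (subsetP (GR j) i iG).
suff -> : Var P c psi R M (fun i j => if i \in G j then wG i j else 0)
   = Var P c psi G M wG by [].
rewrite /Var.
under eq_bigr do rewrite (est_eq GR).
under [X in _ - X ^+ 2]eq_bigr do rewrite (est_eq GR).
rewrite (push P psi GR (fun om => estimator c G wG om ^+ 2)).
by rewrite (push P psi GR (fun om => estimator c G wG om)).
Qed.
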